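(* Let $\Sigma$ be a complete smooth fan in $N_{\mathbb{R}}\cong\mathbb{R}^2$ with rays generated by primitive vectors $n_1,\dots,n_r\in N$ in anticlockwise order, maximal cones $\nu_j=\operatorname{cone}(n_j,n_{j+1})$ (indices mod $r$), self-intersection numbers $b_j$ and vectors $u_j\in M$ as in the context. (1) If $\vartheta$ is a semi-integral support function on $\Sigma$, then its kinks $(\ell_1,\dots,\ell_r)$ are integers forming a set of twisting numbers. (2) Conversely, every set of twisting numbers $(\ell_1,\dots,\ell_r)$ is the set of kinks of a semi-integral support function on $\Sigma$, which is unique up to adding an integral linear function (an element of $M$).
   Context: $M$ is the dual lattice of $N$. The self-intersection number $b_j$ of the toric curve corresponding to the ray $\mathbb{R}_{\ge0}n_j$ is defined by $n_{j-1}+n_{j+1}=-b_j n_j$. Let $u_j\in M$ be the unique primitive vector with $\langle u_j,n_j\rangle=0$ and $\langle u_j,n_{j+1}\rangle>0$. A semi-integral support function is a continuous function $\vartheta:N_{\mathbb{R}}\to\mathbb{R}$ which is linear on each maximal cone $\nu_j$ and satisfies $\vartheta(n_j)\in\tfrac12+\mathbb{Z}$ for all $j$. Writing $\vartheta_j\in M_{\mathbb{R}}$ for the linear function $\vartheta|_{\nu_j}$, the kink $\ell_j$ of $\vartheta$ at the ray $n_j$ is the real number with $\vartheta_j-\vartheta_{j-1}=\tfrac{\ell_j}{2}u_j$. A set of twisting numbers is an $r$-tuple of integers $(\ell_1,\dots,\ell_r)$ such that $\ell_j\equiv b_j \pmod 2$ for all $j$ and $\sum_{j=1}^r\ell_j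 u_j=0$. *)

(* Defs.v *)
(* N = Z*Z, N_R = R*R, M = Z*Z, M_R = R*R with the standard pairing. *)
From Stdlib Require Import Reals ZArith List Lra Lia.
From Coquelicot Require Import Coquelicot.
Open Scope R_scope.

Definition zdet (v w : Z * Z) : Z := (fst v * snd w - snd v * fst w)%Z.
Definition zpair (m n : Z * Z) : Z := (fst m * fst n + snd m * snd n)%Z.
Definition zprimitive (v : Z * Z) : Prop := Z.gcd (fst v) (snd v) = 1%Z.
Definition toR2 (v : Z * Z) : R * R := (IZR (fst v), IZR (snd v)).
Definition rpair (m x : R * R) : R := fst m * fst x + snd m * snd x.

(* cyclic indices 0..r-1 (paper's 1..r); index arithmetic mod r *)
Definition idx (r j : nat) : nat := Nat.modulo j r.
Definition nxt (r j : nat) : nat := Nat.modulo (S j) r.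
Definition prv (r j : nat) : nat := Nat.modulo (j + r - 1) r.

(* Complete smooth fan in R^2 with rays n 0, ..., n (r-1) (primitive) in
   anticlockwise order: the arguments are strictly increasing inside one turn,
   and consecutive rays form a positively oriented Z-basis. *)
Definition complete_smooth_fan (r : nat) (n : nat -> Z * Z) : Prop :=
  (forall j, (j < r)%nat -> zprimitive (n j)) /\
  (exists (th rho : nat -> R),
      (forall j, (j < r)%nat -> 0 < rho j /\
          toR2 (n j) = (rho j * cos (th j), rho j * sin (th j))) /\
      (forall j, (S j < r)%nat -> th j < th (S j)) /\
      (0 < r)%nat /\ th (r - 1)%nat < th 0%nat + 2 * PI) /\
  (forall j, (j < r)%nat -> zdet (n j) (n (nxt r j)) = 1%Z).

Definition selfint_numbers (r : nat) (n : nat -> Z * Z) (b : nat -> Z) : Prop :=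
  forall j, (j < r)%nat ->
    ((fst (n (prv r j)) + fst (n (nxt r j)))%Z = (- b j * fst (n j))%Z /\
     (snd (n (prv r j)) + snd (n (nxt r j)))%Z = (- b j * snd (n j))%Z).

Definition u_vectors (r : nat) (n : nat -> Z * Z) (u : nat -> Z * Z) : Prop :=
  forall j, (j < r)%nat ->
    zprimitive (u j) /\ zpair (u j) (n j) = 0%Z /\ (zpair (u j) (n (nxt r j)) > 0)%Z.

Definition in_cone (r : nat) (n : nat -> Z * Z) (j : nat) (x : R * R) : Prop :=
  exists a c : R, 0 <= a /\ 0 <= c /\
    x = (a * IZR (fst (n j)) + c * IZR (fst (n (nxt r j))),
         a * IZR (snd (n j)) + c * IZR (snd (n (nxt r j)))).

Definition semi_integral_support_with (r : nat) (n : nat -> Z * Z)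
    (vt : R * R -> R) (theta : nat -> R * R) : Prop :=
  (forall x : R * R, continuous vt x) /\
  (forall j, (j < r)%nat -> forall x, in_cone r n j x -> vt x = rpair (theta j) x) /\
  (forall j, (j < r)%nat -> exists k : Z, vt (toR2 (n j)) = IZR k + / 2).

Definition semi_integral_support (r : nat) (n : nat -> Z * Z) (vt : R * R -> R) : Prop :=
  exists theta, semi_integral_support_with r n vt theta.

Definition are_kinks (r : nat) (u : nat -> Z * Z) (theta : nat -> R * R)
    (ell : nat -> R) : Prop :=
  forall j, (j < r)%nat ->
    fst (theta j) - fst (theta (prv r j)) = ell j / 2 * IZR (fst (u j)) /\
    snd (theta j) - snd (theta (prv r j)) = ell j / 2 * IZR (snd (u j)).

Definition zsum (r : nat) (f : nat -> Z) : Z :=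
  fold_right Z.add 0%Z (map f (seq 0 r)).

Definition twisting_numbers (r : nat) (b : nat -> Z) (u : nat -> Z * Z)
    (ell : nat -> Z) : Prop :=
  (forall j, (j < r)%nat -> Z.Even (ell j - b j)) /\
  zsum r (fun j => ell j * fst (u j))%Z = 0%Z /\
  zsum r (fun j => ell j * snd (u j))%Z = 0%Z.

(* Main.v *)
Require Import Defs.
From Stdlib Require Import Reals ZArith List Lra Lia Psatz ClassicalEpsilon.
From Coquelicot Require Import Coquelicot.
Open Scope R_scope.

Lemma nxt_S r j : (S j < r)%nat -> nxt r j = S j.
Proof. intros; unfold nxt; apply Nat.mod_small; lia. Qed.
Lemma nxt_last r j : S j = r -> nxt r j = 0%nat.
Proof. intros; unfold nxt; subst; apply Nat.Div0.mod_same. Qed.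
Lemma nxt_lt r j : (j < r)%nat -> (nxt r j < r)%nat.
Proof. intros; unfold nxt; apply Nat.mod_upper_bound; lia. Qed.
Lemma prv_0 r : (0 < r)%nat -> prv r 0 = (r - 1)%nat.
Proof. intros; unfold prv; apply Nat.mod_small; lia. Qed.
Lemma prv_S r j : (S j < r)%nat -> prv r (S j) = j.
Proof. intros; unfold prv. replace (S j + r - 1)%nat with (j + 1 * r)%nat by lia.
  rewrite Nat.Div0.mod_add. apply Nat.mod_small; lia. Qed.
Lemma prv_lt r j : (j < r)%nat -> (prv r j < r)%nat.
Proof. intros; unfold prv; apply Nat.mod_upper_bound; lia. Qed.
Lemma nxt_prv r j : (j < r)%nat -> nxt r (prv r j) = j.
Proof. intros H. destruct j as [|k].
  - rewrite prv_0 by lia. apply nxt_last; lia.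
  - rewrite prv_S by lia. apply nxt_S; lia. Qed.
Lemma prv_nxt r j : (j < r)%nat -> prv r (nxt r j) = j.
Proof. intros H. destruct (Nat.eq_dec (S j) r).
  - rewrite nxt_last by lia. rewrite prv_0 by lia. lia.
  - rewrite nxt_S by lia. apply prv_S; lia. Qed.

Lemma u_form r n u : (forall j, (j < r)%nat -> zprimitive (n j)) ->
  (forall j, (j < r)%nat -> zdet (n j) (n (nxt r j)) = 1%Z) ->
  u_vectors r n u -> forall j, (j < r)%nat -> u j = (- snd (n j), fst (n j))%Z.
Proof.
  intros Hp Hd Hu j Hj. destruct (Hu j Hj) as [Hpu [H0 H1]].
  specialize (Hp j Hj). specialize (Hd j Hj).
  unfold zprimitive, zpair, zdet in *.
  destruct (u j) as [a b0]. destruct (n j) as [p q]. destruct (n (nxt r j)) as [p' q'].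
  simpl in *.
  destruct (Z.gcd_bezout p q 1 Hp) as [x [y Hxy]].
  set (t := (b0 * x - a * y)%Z).
  assert (Ea : (a + t*q = a*(1 - (x*p+y*q)) + x*(a*p+b0*q))%Z) by (unfold t; ring).
  assert (Eb : (b0 - t*p = b0*(1 - (x*p+y*q)) + y*(a*p+b0*q))%Z) by (unfold t; ring).
  rewrite Hxy, H0 in Ea, Eb.
  assert (Ha : a = (- t * q)%Z) by lia.
  assert (Hb : b0 = (t * p)%Z) by lia.
  assert (Ht : (a * p' + b0 * q' = t)%Z).
  { rewrite Ha, Hb. replace (- t * q * p' + t * p * q')%Z with (t * (p*q' - q*p'))%Z by ring. rewrite Hd; ring. }
  assert (Hdiv : (t | 1)%Z). { rewrite <- Hpu. apply Z.gcd_greatest.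
    - exists (-q)%Z; lia. - exists p; lia. }
  assert (t <= 1)%Z by (apply Z.divide_pos_le; [lia|exact Hdiv]).
  assert (t = 1)%Z by lia. rewrite Ha, Hb, H2. f_equal; lia.
Qed.

Fixpoint sumR (f : nat -> R) (m : nat) : R :=
  match m with O => 0 | S m => sumR f m + f m end.

Lemma sumR_ext f g m : (forall k, (k < m)%nat -> f k = g k) -> sumR f m = sumR g m.
Proof. induction m; simpl; intros; auto. rewrite IHm by (intros; apply H; lia).
  rewrite H by lia; auto. Qed.

Lemma sumR_shift g m : sumR g (S m) = g 0%nat + sumR (fun k => g (S k)) m.
Proof. induction m. simpl; ring. change (sumR g (S (S m))) with (sumR g (S m) + g (S m)).
  rewrite IHm. simpl. ring. Qed.

Lemma sumR_tele g m : sumR (fun k => g (S k) - g k) m = g m - g 0%nat.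
Proof. induction m; simpl. ring. rewrite IHm; ring. Qed.

Lemma fold_seq (f : nat -> Z) s m :
  IZR (fold_right Z.add 0%Z (map f (seq s m))) = sumR (fun k => IZR (f (s + k)%nat)) m.
Proof. revert s; induction m; intros s. reflexivity.
  simpl seq. simpl map. simpl fold_right. rewrite plus_IZR, IHm.
  rewrite sumR_shift. rewrite Nat.add_0_r. f_equal. apply sumR_ext. intros; f_equal; f_equal; lia. Qed.

Lemma zsum_IZR r f : IZR (zsum r f) = sumR (fun k => IZR (f k)) r.
Proof. unfold zsum. rewrite fold_seq. reflexivity. Qed.

Lemma sumR_prv_tele r g : (0 < r)%nat -> sumR (fun j => g j - g (prv r j)) r = 0.
Proof. intros Hr. destruct r as [|m]; [lia|]. rewrite sumR_shift.
  rewrite prv_0 by lia. rewrite (sumR_ext _ (fun k => g (S k) - g k)).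
  rewrite sumR_tele. replace (S m - 1)%nat with m by lia. ring.
  intros; rewrite prv_S by lia; auto. Qed.

Lemma sumR_ge f m j : (forall k, 0 <= f k) -> (j < m)%nat -> f j <= sumR f m.
Proof. intros Hf; induction m; simpl; intros. lia.
  assert (0 <= sumR f m). { clear IHm H; induction m; simpl. lra. specialize (Hf m); lra. }
  destruct (Nat.eq_dec j m). subst; lra. specialize (IHm ltac:(lia)). specialize (Hf m); lra. Qed.

Lemma choice_lt (r : nat) (P : nat -> Z -> Prop) :
  (forall j, (j < r)%nat -> exists k, P j k) -> exists f : nat -> Z, forall j, (j < r)%nat -> P j (f j).
Proof. intros H.
  exists (fun j => match lt_dec j r with left h => proj1_sig (constructive_indefinite_description _ (H j h)) | right _ => 0%Z end).
  intros j Hj. destruct (lt_dec j r); [|lia]. exact (proj2_sig (constructive_indefinite_description _ (H j l))). Qed.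

Definition rdet (x y : R*R) := fst x * snd y - snd x * fst y.

Lemma cone_iff (v w : Z*Z) (x : R*R) : zdet v w = 1%Z ->
 ((exists a c : R, 0 <= a /\ 0 <= c /\ x = (a * IZR (fst v) + c * IZR (fst w), a * IZR (snd v) + c * IZR (snd w)))
   <-> (0 <= rdet (toR2 v) x /\ 0 <= rdet x (toR2 w))).
Proof.
 intros Hd. unfold zdet in Hd. apply (f_equal IZR) in Hd. rewrite minus_IZR, !mult_IZR in Hd.
 destruct v as [p q], w as [p' q'], x as [x1 x2]; unfold rdet, toR2; simpl in *.
 split.
 - intros (a & c & Ha & Hc & E). injection E as E1 E2. subst x1 x2. split.
   + replace (IZR p * (a * IZR q + c * IZR q') - IZR q * (a * IZR p + c * IZR p'))
       with (c * (IZR p * IZR q' - IZR q * IZR p')) by ring. rewrite Hd. lra.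
   + replace ((a * IZR p + c * IZR p') * IZR q' - (a * IZR q + c * IZR q') * IZR p')
       with (a * (IZR p * IZR q' - IZR q * IZR p')) by ring. rewrite Hd. lra.
 - intros [H1 H2]. exists (x1 * IZR q' - x2 * IZR p'), (IZR p * x2 - IZR q * x1).
   split; [lra|split;[lra|]]. f_equal.
   + transitivity (x1 * (IZR p * IZR q' - IZR q * IZR p')); [rewrite Hd; ring | ring].
   + transitivity (x2 * (IZR p * IZR q' - IZR q * IZR p')); [rewrite Hd; ring | ring].
Qed.

Lemma in_cone_iff r n j x : zdet (n j) (n (nxt r j)) = 1%Z ->
  (in_cone r n j x <-> 0 <= rdet (toR2 (n j)) x /\ 0 <= rdet x (toR2 (n (nxt r j)))).
Proof. intros; unfold in_cone; apply cone_iff; auto. Qed.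

Lemma rdet_polar a t b p : rdet (a*cos t, a*sin t) (b*cos p, b*sin p) = a*b*sin(p - t).
Proof. rewrite sin_minus; unfold rdet; simpl; ring. Qed.

Lemma rdet_IZR v w : rdet (toR2 v) (toR2 w) = IZR (zdet v w).
Proof. unfold rdet, toR2, zdet; simpl. rewrite minus_IZR, !mult_IZR. ring. Qed.

Lemma polar x1 x2 : (x1,x2) <> (0,0) -> exists s p, 0 < s /\ x1 = s * cos p /\ x2 = s * sin p.
Proof.
 intros Hne.
 assert (Hpos : 0 < x1*x1 + x2*x2).
 { destruct (Req_dec x1 0) as [e1|e1]; destruct (Req_dec x2 0) as [e2|e2].
   - subst; exfalso; apply Hne; reflexivity.
   - pose proof (Rsqr_pos_lt x2 e2); unfold Rsqr in *; nra.
   - pose proof (Rsqr_pos_lt x1 e1); unfold Rsqr in *; nra.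
   - pose proof (Rsqr_pos_lt x1 e1); unfold Rsqr in *; nra. }
 set (s := sqrt (x1*x1+x2*x2)).
 assert (Hs : 0 < s) by (apply sqrt_lt_R0; lra).
 assert (Hss : s * s = x1*x1+x2*x2) by (apply sqrt_sqrt; lra).
 assert (Hb : -s <= x1 <= s) by nra.
 assert (Hcs : x1 / s * s = x1) by (field; lra).
 assert (Hc : -1 <= x1/s <= 1) by (split; nra).
 assert (Hsq : 1 - (x1/s)² = (x2/s)²).
 { unfold Rsqr. replace (1 - x1/s*(x1/s)) with ((s*s - x1*x1)/(s*s)) by (field; lra).
   replace (s*s - x1*x1) with (x2*x2) by lra. field; lra. }
 destruct (Rle_dec 0 x2) as [h|h].
 - exists s, (acos (x1/s)). split; auto. split.
   + rewrite cos_acos by auto; field; lra.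
   + rewrite sin_acos by auto. rewrite Hsq, sqrt_Rsqr_abs, Rabs_pos_eq. field; lra.
     unfold Rdiv; apply Rmult_le_pos; [lra| left; apply Rinv_0_lt_compat; lra].
 - exists s, (- acos (x1/s)). split; auto. split.
   + rewrite cos_neg, cos_acos by auto; field; lra.
   + rewrite sin_neg, sin_acos by auto. rewrite Hsq, sqrt_Rsqr_abs, Rabs_left. field; lra.
     assert (0 < /s) by (apply Rinv_0_lt_compat; lra). unfold Rdiv. nra.
Qed.

Lemma cosZ x k : cos (x + IZR k * (2*PI)) = cos x /\ sin (x + IZR k * (2*PI)) = sin x.
Proof.
 destruct k as [|p|p].
 - simpl. rewrite Rmult_0_l, Rplus_0_r. auto.
 - rewrite <- positive_nat_Z, <- INR_IZR_INZ.
   replace (x + INR (Pos.to_nat p) * (2*PI)) with (x + 2 * INR (Pos.to_nat p) * PI) by ring.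
   rewrite cos_period, sin_period; auto.
 - rewrite <- Pos2Z.opp_pos, opp_IZR, <- positive_nat_Z, <- INR_IZR_INZ.
   set (m := INR (Pos.to_nat p)).
   rewrite <- (cos_period (x + - m*(2*PI)) (Pos.to_nat p)).
   rewrite <- (sin_period (x + - m*(2*PI)) (Pos.to_nat p)). fold m.
   replace (x + - m * (2 * PI) + 2 * m * PI) with x by ring. auto.
Qed.

Lemma shift2pi p a : exists p', a <= p' < a + 2*PI /\ cos p' = cos p /\ sin p' = sin p.
Proof.
 set (k := Zfloor ((p - a)/(2*PI))).
 pose proof (Zfloor_bound ((p - a)/(2*PI))) as Hb. fold k in Hb.
 pose proof PI_RGT_0.
 assert (Hy : (p - a)/(2*PI) * (2*PI) = p - a) by (field; lra).
 exists (p + IZR (- k) * (2*PI)). rewrite opp_IZR. split.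
 - split; nra.
 - rewrite <- opp_IZR. apply cosZ.
Qed.

Lemma trigC t : 0 < t <= 2*PI -> 0 <= sin t -> t <= PI \/ t = 2*PI.
Proof. intros [h1 h2] hs. destruct (Rle_dec t PI); auto. destruct (Req_dec t (2*PI)); auto.
  pose proof (sin_lt_0 t ltac:(lra) ltac:(lra)). lra. Qed.

Lemma trigB t : -(2*PI) < t <= 0 -> 0 <= sin t -> t = 0 \/ t <= -PI.
Proof. intros [h1 h2] hs. destruct (Req_dec t 0); auto. destruct (Rle_dec t (-PI)); auto.
  pose proof (sin_gt_0 (-t) ltac:(lra) ltac:(lra)). rewrite sin_neg in H0. lra. Qed.

Lemma lemK (T : nat -> R) (r : nat) (phi : R) (J j : nat) :
  (forall i k, (i < k)%nat -> (k <= r)%nat -> T i < T k) ->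
  T r = T 0%nat + 2*PI -> T 0%nat <= phi < T r ->
  (J < r)%nat -> T J <= phi < T (S J) -> (j < r)%nat ->
  0 <= sin (phi - T j) -> 0 <= sin (T (S j) - phi) ->
  j = J \/ (S j = J /\ phi = T J) \/ (J = 0%nat /\ S j = r /\ phi = T 0%nat).
Proof.
 intros Hm Hr Hphi HJ HJp Hj s1 s2. pose proof PI_RGT_0.
 assert (Hle : forall i k, (i <= k)%nat -> (k <= r)%nat -> T i <= T k).
 { intros i k h1 h2. destruct (Nat.eq_dec i k). subst; lra. left; apply Hm; lia. }
 destruct (lt_eq_lt_dec j J) as [[hl|he]|hg]; auto.
 -
   assert (T (S j) <= T J) by (apply Hle; lia).
   assert (T j < T (S j)) by (apply Hm; lia).
   assert (T 0%nat <= T j) by (apply Hle; lia).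
   assert (T 0%nat < T (S j)) by (apply Hm; lia).
   destruct (trigC (phi - T j) ltac:(lra) s1) as [c1|c1]; [|lra].
   destruct (trigB (T (S j) - phi) ltac:(lra) s2) as [c2|c2]; [|lra].
   right; left. split; [|lra].
   destruct (Nat.eq_dec (S j) J); auto.
   assert (T (S j) < T J) by (apply Hm; lia). lra.
 -
   assert (T (S J) <= T j) by (apply Hle; lia).
   assert (T j < T (S j)) by (apply Hm; lia).
   assert (T j < T r) by (apply Hm; lia).
   assert (T (S j) <= T r) by (apply Hle; lia).
   destruct (trigB (phi - T j) ltac:(lra) s1) as [c1|c1]; [lra|].
   destruct (trigC (T (S j) - phi) ltac:(lra) s2) as [c2|c2]; [lra|].
   right; right.
   assert (S j = r). { destruct (Nat.eq_dec (S j) r); auto. assert (T (S j) < T r) by (apply Hm; lia). lra. }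
   assert (phi = T 0%nat) by lra. split; [|split;auto].
   destruct J; auto. assert (T 0%nat < T (S J)) by (apply Hm; lia). lra.
Qed.

Definition Tf (r : nat) (th : nat -> R) (k : nat) : R :=
  if Nat.ltb k r then th k else th 0%nat + 2*PI.

Lemma Tf_lt r th k : (k < r)%nat -> Tf r th k = th k.
Proof. intros H; unfold Tf; rewrite (proj2 (Nat.ltb_lt k r) H); auto. Qed.
Lemma Tf_r r th : Tf r th r = th 0%nat + 2*PI.
Proof. unfold Tf; rewrite Nat.ltb_irrefl; auto. Qed.

Lemma Tf_mono r th : (0 < r)%nat -> (forall j, (S j < r)%nat -> th j < th (S j)) ->
  th (r - 1)%nat < th 0%nat + 2*PI ->
  forall i k, (i < k)%nat -> (k <= r)%nat -> Tf r th i < Tf r th k.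
Proof.
 intros Hr Hinc Hl.
 assert (step : forall k, (S k <= r)%nat -> Tf r th k < Tf r th (S k)).
 { intros k hk. rewrite Tf_lt by lia. destruct (Nat.eq_dec (S k) r) as [e|e].
   - rewrite e, Tf_r. replace k with (r-1)%nat by lia. auto.
   - rewrite Tf_lt by lia. apply Hinc; lia. }
 intros i k; induction k; intros h1 h2. lia.
 destruct (Nat.eq_dec i k). subst; apply step; lia.
 specialize (IHk ltac:(lia) ltac:(lia)). specialize (step k h2). lra.
Qed.

Lemma sgn_l a y : 0 < a -> 0 <= a * y -> 0 <= y.
Proof. intros; destruct (Rle_lt_dec 0 y); auto; nra. Qed.

Lemma classify r n : complete_smooth_fan r n -> forall x, x <> (0,0) ->
  exists J, (J < r)%nat /\ in_cone r n J x /\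
   forall j, (j < r)%nat -> in_cone r n j x ->
     j = J \/ (S j = J /\ rdet (toR2 (n J)) x = 0) \/
     (J = 0%nat /\ S j = r /\ rdet (toR2 (n J)) x = 0).
Proof.
 intros Hfan x Hx.
 destruct Hfan as [Hprim [[th [rho [Hpol [Hinc [Hr Hlast]]]]] Hdet]].
 pose proof (Tf_mono r th Hr Hinc Hlast) as Hm.
 set (T := Tf r th) in *.
 assert (Hle : forall i k, (i <= k)%nat -> (k <= r)%nat -> T i <= T k).
 { intros i k h1 h2. destruct (Nat.eq_dec i k). subst; lra. left; apply Hm; lia. }
 assert (Tr : T r = T 0%nat + 2*PI) by (unfold T; rewrite Tf_r, Tf_lt by lia; auto).
 assert (nv : forall j, (j < r)%nat -> 0 < rho j /\ toR2 (n j) = (rho j * cos (T j), rho j * sin (T j))).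
 { intros j hj. unfold T; rewrite Tf_lt by auto. apply Hpol; auto. }
 assert (nvn : forall j, (j < r)%nat -> exists rh, 0 < rh /\
           toR2 (n (nxt r j)) = (rh * cos (T (S j)), rh * sin (T (S j)))).
 { intros j hj. destruct (Nat.eq_dec (S j) r) as [e|e].
   - rewrite nxt_last by auto. rewrite e, Tr. destruct (nv 0%nat ltac:(lia)) as [h1 h2].
     exists (rho 0%nat); split; auto. rewrite h2.
     replace (T 0%nat + 2*PI) with (T 0%nat + IZR 1 * (2*PI)) by (simpl; ring).
     destruct (cosZ (T 0%nat) 1) as [c1 c2]. rewrite c1, c2; auto.
   - rewrite nxt_S by lia. exists (rho (S j)). apply nv; lia. }
 pose proof PI_RGT_0.
 assert (gap : forall j, (j < r)%nat -> T (S j) - T j < PI).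
 { intros j hj. pose proof (Hdet j hj) as hd. apply (f_equal IZR) in hd.
   rewrite <- rdet_IZR in hd. destruct (nv j hj) as [r1 e1]. destruct (nvn j hj) as (r2 & r2p & e2).
   rewrite e1, e2, rdet_polar in hd.
   assert (hs : 0 < sin (T (S j) - T j)).
   { destruct (Rlt_le_dec 0 (sin (T (S j) - T j))); auto. assert (0 < rho j*r2) by nra. nra. }
   assert (T j < T (S j)) by (apply Hm; lia).
   assert (T 0%nat <= T j) by (apply Hle; lia).
   assert (T (S j) <= T r) by (apply Hle; lia).
   destruct (trigC (T (S j) - T j) ltac:(lra) ltac:(lra)) as [c|c].
   - destruct (Req_dec (T (S j) - T j) PI) as [e|e]; [|lra]. rewrite e, sin_PI in hs; lra.
   - rewrite c, sin_2PI in hs; lra. }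
 destruct x as [x1 x2]. destruct (polar x1 x2 Hx) as (s & p0 & hs & ex1 & ex2).
 destruct (shift2pi p0 (T 0%nat)) as (phi & hphi & c1 & c2).
 rewrite <- c1 in ex1; rewrite <- c2 in ex2. subst x1 x2.
 assert (findJ : forall d m, (m + d = r - 1)%nat -> T m <= phi ->
            exists J, (J < r)%nat /\ T J <= phi < T (S J)).
 { induction d; intros m hm hp.
   - exists m; split; [lia|split; auto]. replace (S m) with r by lia. lra.
   - destruct (Rlt_le_dec phi (T (S m))). exists m; split; [lia|auto].
     apply (IHd (S m)); auto; lia. }
 destruct (findJ (r-1)%nat 0%nat ltac:(lia) ltac:(lra)) as (J & hJ & hJp).
 assert (D1 : forall j, (j < r)%nat -> rdet (toR2 (n j)) (s * cos phi, s * sin phi) = rho j * s * sin (phi - T j)).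
 { intros j hj. destruct (nv j hj) as [_ e]. rewrite e, rdet_polar; auto. }
 assert (D2 : forall j, (j < r)%nat -> exists rh, 0 < rh /\
     rdet (s * cos phi, s * sin phi) (toR2 (n (nxt r j))) = s * rh * sin (T (S j) - phi)).
 { intros j hj. destruct (nvn j hj) as (rh & hr & e). exists rh; split; auto. rewrite e, rdet_polar; auto. }
 exists J. split; auto. split.
 - apply in_cone_iff; auto. destruct (D2 J hJ) as (rh & hr & e). rewrite D1, e by auto.
   destruct (nv J hJ) as [hrJ _]. pose proof (gap J hJ).
   split; apply Rmult_le_pos; try nra; apply sin_ge_0; lra.
 - intros j hj hc. apply in_cone_iff in hc; auto. destruct hc as [h1 h2].
   rewrite D1 in h1 by auto. destruct (D2 j hj) as (rh & hr & e). rewrite e in h2.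
   destruct (nv j hj) as [hrj _].
   apply sgn_l in h1; [|nra]. apply sgn_l in h2; [|nra].
   assert (Hphi : T 0%nat <= phi < T r) by lra.
   destruct (lemK T r phi J j Hm Tr Hphi hJ hJp hj h1 h2) as [h|[[h3 h4]|(h3 & h4 & h5)]]; auto.
   + right; left; split; auto. rewrite D1 by auto. rewrite h4. replace (T J - T J) with 0 by ring.
     rewrite sin_0; ring.
   + right; right; split; auto; split; auto. rewrite D1 by auto. rewrite h3, h5.
     replace (T 0%nat - T 0%nat) with 0 by ring. rewrite sin_0; ring.
Qed.

Lemma fan_r r n : complete_smooth_fan r n -> (0 < r)%nat.
Proof. intros [_ [[th [rho [_ [_ [Hr _]]]]] _]]; auto. Qed.
Lemma fan_det r n : complete_smooth_fan r n -> forall j, (j < r)%nat -> zdet (n j) (n (nxt r j)) = 1%Z.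
Proof. intros [_ [_ H]]; auto. Qed.
Lemma fan_u r n u : complete_smooth_fan r n -> u_vectors r n u ->
  forall j, (j < r)%nat -> u j = (- snd (n j), fst (n j))%Z.
Proof. intros Hf Hu. apply u_form; auto. destruct Hf as [H _]; auto. apply fan_det; auto. Qed.

Lemma in_cone_self r n j : in_cone r n j (toR2 (n j)).
Proof. exists 1, 0. repeat split; try lra. unfold toR2; f_equal; ring. Qed.
Lemma in_cone_next r n j : in_cone r n j (toR2 (n (nxt r j))).
Proof. exists 0, 1. repeat split; try lra. unfold toR2; f_equal; ring. Qed.

Lemma cover r n : complete_smooth_fan r n -> forall x, exists j, (j < r)%nat /\ in_cone r n j x.
Proof.
 intros Hf x. destruct (classic (x = (0,0))) as [e|e].
 - exists 0%nat. split. apply (fan_r r n Hf). exists 0, 0. repeat split; try lra. rewrite e; f_equal; ring.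
 - destruct (classify r n Hf x e) as (J & hJ & hc & _). eauto.
Qed.

Lemma kink_step (a b : R*R) (uJ nJ : Z*Z) (x : R*R) e :
  fst a - fst b = e * IZR (fst uJ) -> snd a - snd b = e * IZR (snd uJ) ->
  uJ = (- snd nJ, fst nJ)%Z -> rdet (toR2 nJ) x = 0 -> rpair a x = rpair b x.
Proof.
 intros h1 h2 hu hd. subst uJ. destruct x as [x1 x2]. unfold rdet, toR2, rpair in *; simpl in *.
 rewrite opp_IZR in h1.
 assert ((fst a - fst b)*x1 + (snd a - snd b)*x2 = e*(IZR (fst nJ) * x2 - IZR (snd nJ) * x1))
   by (rewrite h1, h2; ring).
 rewrite hd in H. lra.
Qed.

Definition kinkform r (u : nat -> Z*Z) (theta : nat -> R*R) :=
  forall j, (j < r)%nat -> exists e, fst (theta j) - fst (theta (prv r j)) = e * IZR (fst (u j)) /\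
                                snd (theta j) - snd (theta (prv r j)) = e * IZR (snd (u j)).

Lemma WD r n u theta : complete_smooth_fan r n -> u_vectors r n u -> kinkform r u theta ->
  forall x j k, (j < r)%nat -> (k < r)%nat -> in_cone r n j x -> in_cone r n k x ->
  rpair (theta j) x = rpair (theta k) x.
Proof.
 intros Hf Hu Hk x j k hj hk cj ck.
 destruct (classic (x = (0,0))) as [e|e].
 - subst; unfold rpair; simpl; ring.
 - destruct (classify r n Hf x e) as (J & hJ & hc & hcl).
   assert (G : forall i, (i < r)%nat -> in_cone r n i x -> rpair (theta i) x = rpair (theta J) x).
   { intros i hi ci. destruct (hcl i hi ci) as [h|[[h1 h2]|(h1 & h2 & h3)]].
     - subst; auto.
     - subst J. destruct (Hk (S i) hJ) as (e0 & e1 & e2). rewrite prv_S in e1, e2 by lia.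
       symmetry; apply (kink_step (theta (S i)) (theta i) (u (S i)) (n (S i)) x e0); auto.
       apply (fan_u r n u Hf Hu); auto.
     - destruct (Hk J hJ) as (e0 & e1 & e2). subst J. rewrite prv_0 in e1, e2 by lia.
       replace (r - 1)%nat with i in e1, e2 by lia.
       symmetry; apply (kink_step (theta 0%nat) (theta i) (u 0%nat) (n 0%nat) x e0); auto. apply (fan_u r n u Hf Hu); auto. }
   rewrite (G j), (G k); auto.
Qed.

Fixpoint minR (f : nat -> R) (m : nat) : R :=
  match m with O => 1 | S m => Rmin (minR f m) (f m) end.
Lemma minR_pos f m : (forall k, 0 < f k) -> 0 < minR f m.
Proof. intros H; induction m; simpl. lra. apply Rmin_glb_lt; auto. Qed.
Lemma minR_le f m k : (k < m)%nat -> minR f m <= f k.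
Proof. induction m; simpl; intros. lia. destruct (Nat.eq_dec k m). subst; apply Rmin_r.
  eapply Rle_trans; [apply Rmin_l| apply IHm; lia]. Qed.

Lemma lip P Q d1 d2 dl : Rabs d1 <= dl -> Rabs d2 <= dl -> Rabs (P*d2 - Q*d1) <= (Rabs P + Rabs Q)*dl.
Proof.
 intros h1 h2. unfold Rminus. eapply Rle_trans; [apply Rabs_triang|].
 rewrite Rabs_Ropp, !Rabs_mult. pose proof (Rabs_pos P). pose proof (Rabs_pos Q). nra.
Qed.

Lemma pl_cont r n (theta : nat -> R*R) vt : complete_smooth_fan r n ->
  (forall j x, (j < r)%nat -> in_cone r n j x -> vt x = rpair (theta j) x) ->
  forall x, continuous vt x.
Proof.
 intros Hf Hv x. unfold continuous. apply (proj2 (filterlim_locally _ _)). intros eps.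
 set (L := 1 + sumR (fun j => Rabs (IZR (fst (n j))) + Rabs (IZR (snd (n j)))) r).
 set (B := 1 + sumR (fun j => Rabs (fst (theta j)) + Rabs (snd (theta j))) r).
 assert (HL0 : 0 <= sumR (fun j => Rabs (IZR (fst (n j))) + Rabs (IZR (snd (n j)))) r).
 { clear; induction r; simpl. lra. pose proof (Rabs_pos (IZR (fst (n r)))). pose proof (Rabs_pos (IZR (snd (n r)))). lra. }
 assert (HB0 : 0 <= sumR (fun j => Rabs (fst (theta j)) + Rabs (snd (theta j))) r).
 { clear; induction r; simpl. lra. pose proof (Rabs_pos (fst (theta r))). pose proof (Rabs_pos (snd (theta r))). lra. }
 assert (HLj : forall j, (j < r)%nat -> Rabs (IZR (fst (n j))) + Rabs (IZR (snd (n j))) <= L).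
 { intros j hj. unfold L. pose proof (sumR_ge (fun j => Rabs (IZR (fst (n j))) + Rabs (IZR (snd (n j)))) r j) as G.
   simpl in G. assert (Rabs (IZR (fst (n j))) + Rabs (IZR (snd (n j))) <= sumR (fun j => Rabs (IZR (fst (n j))) + Rabs (IZR (snd (n j)))) r).
   apply G; auto. intros k; pose proof (Rabs_pos (IZR (fst (n k)))); pose proof (Rabs_pos (IZR (snd (n k)))); lra. lra. }
 assert (HBj : forall j, (j < r)%nat -> Rabs (fst (theta j)) + Rabs (snd (theta j)) <= B).
 { intros j hj. unfold B. assert (Rabs (fst (theta j)) + Rabs (snd (theta j)) <= sumR (fun j => Rabs (fst (theta j)) + Rabs (snd (theta j))) r).
   apply (sumR_ge (fun j => Rabs (fst (theta j)) + Rabs (snd (theta j)))); auto.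
   intros k; pose proof (Rabs_pos (fst (theta k))); pose proof (Rabs_pos (snd (theta k))); lra. lra. }
 set (h := fun j => if Rle_dec 0 (rdet (toR2 (n j)) x) then
                      (if Rle_dec 0 (rdet x (toR2 (n (nxt r j)))) then 1 else - rdet x (toR2 (n (nxt r j))))
                    else - rdet (toR2 (n j)) x).
 assert (hpos : forall j, 0 < h j).
 { intros j; unfold h. destruct (Rle_dec 0 (rdet (toR2 (n j)) x)); [destruct (Rle_dec 0 (rdet x (toR2 (n (nxt r j)))))|]; lra. }
 pose proof (minR_pos h r hpos) as mpos.
 pose proof (minR_le h r) as mle.
 set (m := minR h r) in *.
 pose proof (cond_pos eps) as epos.
 assert (dpos : 0 < Rmin (m / (2*L)) (eps / (2*B))).
 { assert (0 < L) by (unfold L; lra). assert (0 < B) by (unfold B; lra).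
   apply Rmin_glb_lt; unfold Rdiv; apply Rmult_lt_0_compat; try (apply Rinv_0_lt_compat); lra. }
 exists (mkposreal _ dpos). intros y [b1 b2]. simpl in b1, b2.
 set (dl := Rmin (m / (2*L)) (eps / (2*B))) in *.
 assert (dl1 : dl * (2*L) <= m).
 { assert (HL : 0 < L) by (unfold L; lra). assert (H : dl <= m / (2*L)) by apply Rmin_l.
   apply (Rmult_le_compat_r (2*L)) in H; [|lra]. unfold Rdiv in H. rewrite Rmult_assoc, Rinv_l in H; lra. }
 assert (dl2 : dl * (2*B) <= eps).
 { assert (HB : 0 < B) by (unfold B; lra). assert (H : dl <= eps / (2*B)) by apply Rmin_r.
   apply (Rmult_le_compat_r (2*B)) in H; [|lra]. unfold Rdiv in H. rewrite Rmult_assoc, Rinv_l in H; lra. }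
 unfold ball in b1, b2; simpl in b1, b2; unfold AbsRing_ball, abs, minus, plus, opp in b1, b2; simpl in b1, b2.
 destruct (cover r n Hf y) as (k & hk & cky).
 assert (ckx : in_cone r n k x).
 { pose proof (fan_det r n Hf k hk) as hd. apply in_cone_iff in cky; auto. apply in_cone_iff; auto.
   destruct cky as [c1 c2].
   pose proof (mle k hk) as hm. unfold h in hm.
   destruct x as [x1 x2], y as [y1 y2]. simpl in b1, b2.
   change (y1 + - x1) with (y1 - x1) in b1; change (y2 + - x2) with (y2 - x2) in b2.
   pose proof (HLj k hk) as L1. pose proof (HLj (nxt r k) (nxt_lt r k hk)) as L2.
   pose proof (lip (IZR (fst (n k))) (IZR (snd (n k))) (y1 - x1) (y2 - x2) dl ltac:(lra) ltac:(lra)) as l1.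
   pose proof (lip (IZR (fst (n (nxt r k)))) (IZR (snd (n (nxt r k)))) (y1 - x1) (y2 - x2) dl ltac:(lra) ltac:(lra)) as l2.
   unfold rdet, toR2 in *; simpl in *.
   set (P := IZR (fst (n k))) in *. set (Q := IZR (snd (n k))) in *.
   set (P' := IZR (fst (n (nxt r k)))) in *. set (Q' := IZR (snd (n (nxt r k)))) in *.
   assert (e1 : P * (y2 - x2) - Q * (y1 - x1) = (P*y2 - Q*y1) - (P*x2 - Q*x1)) by ring.
   assert (e2 : P' * (y2 - x2) - Q' * (y1 - x1) = - ((y1*Q' - y2*P') - (x1*Q' - x2*P'))) by ring.
   rewrite e1 in l1. rewrite e2, Rabs_Ropp in l2.
   assert (dlpos : 0 <= dl) by lra.
   assert (LdL : (Rabs P + Rabs Q) * dl <= L * dl) by (apply Rmult_le_compat_r; lra).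
   assert (LdL' : (Rabs P' + Rabs Q') * dl <= L * dl) by (apply Rmult_le_compat_r; lra).
   destruct (Rle_dec 0 (P * x2 - Q * x1)) as [g1|g1].
   - destruct (Rle_dec 0 (x1 * Q' - x2 * P')) as [g2|g2]; split; auto.
     exfalso.
     assert (Rabs ((y1 * Q' - y2 * P') - (x1 * Q' - x2 * P')) <= - (x1 * Q' - x2 * P') / 2) by lra.
     eapply Rle_trans in H; [|apply Rle_abs]. lra.
   - exfalso.
     assert (Rabs ((P*y2 - Q*y1) - (P*x2 - Q*x1)) <= - (P * x2 - Q * x1) / 2) by lra.
     eapply Rle_trans in H; [|apply Rle_abs]. lra. }
 rewrite (Hv k y hk cky), (Hv k x hk ckx).
 destruct x as [x1 x2], y as [y1 y2]. simpl in b1, b2. unfold rpair; simpl.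
 change (y1 + - x1) with (y1 - x1) in b1; change (y2 + - x2) with (y2 - x2) in b2.
 pose proof (HBj k hk) as Bk.
 pose proof (lip (snd (theta k)) (- fst (theta k)) (y1 - x1) (y2 - x2) dl ltac:(lra) ltac:(lra)) as l.
 rewrite Rabs_Ropp in l.
 assert (dlpos : 0 <= dl) by lra.
 assert ((Rabs (snd (theta k)) + Rabs (fst (theta k))) * dl <= B * dl) by (apply Rmult_le_compat_r; lra).
 unfold ball; simpl; unfold AbsRing_ball, abs, minus, plus, opp; simpl.
 replace (fst (theta k) * y1 + snd (theta k) * y2 + - (fst (theta k) * x1 + snd (theta k) * x2))
   with (snd (theta k) * (y2 - x2) - - fst (theta k) * (y1 - x1)) by ring.
 assert (HB : 0 < B) by (unfold B; lra).
 lra.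
Qed.

Lemma alg (A1 A2 B1 B2 P Q P1 Q1 P2 Q2 Bv V0 Vq Vp : R) :
  A1*P + A2*Q = V0 -> B1*P + B2*Q = V0 -> A1*P1 + A2*Q1 = Vq -> B1*P2 + B2*Q2 = Vp ->
  P2 + P1 = -Bv*P -> Q2 + Q1 = -Bv*Q -> P*Q1 - Q*P1 = 1 ->
  A1 - B1 = (Vq + Bv*V0 + Vp) * (-Q) /\ A2 - B2 = (Vq + Bv*V0 + Vp) * P.
Proof.
 intros E1 E2 E3 E4 H1 H2 Hd.
 assert (hP1 : P1 = -Bv*P - P2) by lra. assert (hQ1 : Q1 = -Bv*Q - Q2) by lra.
 assert (hc : (A1-B1)*P1 + (A2-B2)*Q1 = Vq + Bv*V0 + Vp).
 { assert (B1*P1 + B2*Q1 = -Bv*(B1*P+B2*Q) - (B1*P2+B2*Q2)) by (rewrite hP1, hQ1; ring).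
   rewrite E2, E4 in H. nra. }
 assert (h0 : (A1-B1)*P + (A2-B2)*Q = 0) by nra.
 split.
 - assert (I : A1 - B1 + ((A1-B1)*P1 + (A2-B2)*Q1)*Q = (A1-B1)*(1 - (P*Q1 - Q*P1)) + Q1*((A1-B1)*P + (A2-B2)*Q)) by ring.
   rewrite Hd, h0, hc in I. lra.
 - assert (I : A2 - B2 - ((A1-B1)*P1 + (A2-B2)*Q1)*P = (A2-B2)*(1 - (P*Q1 - Q*P1)) - P1*((A1-B1)*P + (A2-B2)*Q)) by ring.
   rewrite Hd, h0, hc in I. lra.
Qed.

Fixpoint thF (t0 : R*R) (l : nat -> Z) (u : nat -> Z*Z) (k : nat) : R*R :=
  match k with
  | O => t0
  | S k => (fst (thF t0 l u k) + IZR (l (S k)) / 2 * IZR (fst (u (S k))),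
            snd (thF t0 l u k) + IZR (l (S k)) / 2 * IZR (snd (u (S k))))
  end.

Lemma thF_sum t0 l u m :
  fst (thF t0 l u m) = fst t0 + sumR (fun k => IZR (l (S k) * fst (u (S k)))) m / 2 /\
  snd (thF t0 l u m) = snd t0 + sumR (fun k => IZR (l (S k) * snd (u (S k)))) m / 2.
Proof. induction m; simpl. split; lra. destruct IHm as [h1 h2]. rewrite h1, h2, !mult_IZR. split; lra. Qed.

Lemma part1 r n b u : complete_smooth_fan r n -> selfint_numbers r n b -> u_vectors r n u ->
  forall (vt : R * R -> R) (theta : nat -> R * R),
     semi_integral_support_with r n vt theta ->
     exists ell : nat -> Z,
       are_kinks r u theta (fun j => IZR (ell j)) /\ twisting_numbers r b u ell.
Proof.
 intros Hf Hb Hu vt theta [_ [Hlin Hhalf]].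
 pose proof (fan_r r n Hf) as Hr.
 destruct (choice_lt r _ Hhalf) as [kf Hkf].
 exists (fun j => (2*(kf (nxt r j) + b j * kf j + kf (prv r j)) + 2 + b j)%Z).
 assert (key : are_kinks r u theta (fun j => IZR ((2*(kf (nxt r j) + b j * kf j + kf (prv r j)) + 2 + b j)%Z))).
 { intros j hj.
   assert (HL : IZR ((2*(kf (nxt r j) + b j * kf j + kf (prv r j)) + 2 + b j)%Z) = 2*(IZR (kf (nxt r j)) + IZR (b j) * IZR (kf j) + IZR (kf (prv r j))) + 2 + IZR (b j)) by (rewrite !plus_IZR, !mult_IZR, !plus_IZR, mult_IZR; reflexivity).
   rewrite HL.
   pose proof (prv_lt r j hj) as hp. pose proof (nxt_lt r j hj) as hq.
   pose proof (Hlin j hj _ (in_cone_self r n j)) as E1.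
   pose proof (Hlin _ hp _ (in_cone_next r n (prv r j))) as E2. rewrite nxt_prv in E2 by auto.
   pose proof (Hlin j hj _ (in_cone_next r n j)) as E3.
   pose proof (Hlin _ hp _ (in_cone_self r n (prv r j))) as E4.
   rewrite (Hkf j hj) in E1, E2. rewrite (Hkf _ hq) in E3. rewrite (Hkf _ hp) in E4.
   destruct (Hb j hj) as [hb1 hb2]. apply (f_equal IZR) in hb1, hb2.
   rewrite plus_IZR, mult_IZR, opp_IZR in hb1, hb2.
   pose proof (fan_det r n Hf j hj) as hd. apply (f_equal IZR) in hd. rewrite <- rdet_IZR in hd.
   rewrite (fan_u r n u Hf Hu j hj). unfold rpair, toR2, rdet in *; simpl in *.
   rewrite opp_IZR.
   destruct (alg _ _ _ _ _ _ _ _ _ _ _ _ _ _ (eq_sym E1) (eq_sym E2) (eq_sym E3) (eq_sym E4) hb1 hb2 hd) as [a1 a2].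
   rewrite a1, a2. split; field. }
 split; auto. split; [|split].
 - intros j hj. exists (kf (nxt r j) + b j * kf j + kf (prv r j) + 1)%Z. lia.
 - apply eq_IZR. rewrite zsum_IZR.
   rewrite (sumR_ext _ (fun j => (2 * fst (theta j)) - (2 * fst (theta (prv r j))))).
   exact (sumR_prv_tele r (fun j => 2 * fst (theta j)) Hr).
   intros k hk. destruct (key k hk) as [k1 _]. rewrite mult_IZR. nra.
 - apply eq_IZR. rewrite zsum_IZR.
   rewrite (sumR_ext _ (fun j => (2 * snd (theta j)) - (2 * snd (theta (prv r j))))).
   exact (sumR_prv_tele r (fun j => 2 * snd (theta j)) Hr).
   intros k hk. destruct (key k hk) as [_ k1]. rewrite mult_IZR. nra.
Qed.

Lemma part2e r n b u ell : complete_smooth_fan r n -> selfint_numbers r n b -> u_vectors r n u ->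
  twisting_numbers r b u ell ->
  exists (vt : R * R -> R) (theta : nat -> R * R),
        semi_integral_support_with r n vt theta /\
        are_kinks r u theta (fun j => IZR (ell j)).
Proof.
 intros Hf Hb Hu [Hev [Hs1 Hs2]].
 pose proof (fan_r r n Hf) as Hr.
 set (t0 := ((IZR (snd (n (nxt r 0))) - IZR (snd (n 0%nat)))/2, (IZR (fst (n 0%nat)) - IZR (fst (n (nxt r 0))))/2)).
 set (theta := thF t0 ell u).
 assert (K : are_kinks r u theta (fun j => IZR (ell j))).
 { intros j hj. destruct j as [|k].
   - rewrite prv_0 by auto. destruct (thF_sum t0 ell u (r-1)) as [f1 f2]. unfold theta. rewrite f1, f2.
     apply (f_equal IZR) in Hs1, Hs2. rewrite zsum_IZR in Hs1, Hs2.
     assert (Er : r = S (r-1)) by lia. rewrite Er in Hs1, Hs2. rewrite sumR_shift in Hs1, Hs2.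
     rewrite mult_IZR in Hs1, Hs2. simpl thF. split; lra.
   - rewrite prv_S by auto. unfold theta; simpl thF; simpl; split; ring. }
 assert (KF : kinkform r u theta).
 { intros j hj. exists (IZR (ell j) / 2). apply K; auto. }
 assert (HI : forall j, (j < r)%nat ->
   (exists k1, rpair (theta j) (toR2 (n j)) = IZR k1 + / 2) /\
   (exists k2, rpair (theta j) (toR2 (n (nxt r j))) = IZR k2 + / 2)).
 { induction j; intros hj.
   - pose proof (fan_det r n Hf 0%nat hj) as hd. apply (f_equal IZR) in hd. rewrite <- rdet_IZR in hd.
     unfold rdet, toR2 in hd; simpl in hd.
     split; exists 0%Z; unfold theta, rpair, toR2, t0; simpl; lra.
   - destruct (IHj ltac:(lia)) as [[k1 h1] [k2 h2]]. rewrite nxt_S in h2 by lia.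
     pose proof (fan_u r n u Hf Hu (S j) hj) as hu.
     destruct (Hev (S j) hj) as [w hw].
     assert (hl : IZR (ell (S j)) = IZR (b (S j)) + 2 * IZR w).
     { rewrite <- mult_IZR, <- plus_IZR. f_equal. lia. }
     destruct (Hb (S j) hj) as [hb1 hb2]. rewrite prv_S in hb1, hb2 by lia.
     apply (f_equal IZR) in hb1, hb2. rewrite plus_IZR, mult_IZR, opp_IZR in hb1, hb2.
     pose proof (fan_det r n Hf (S j) hj) as hd. apply (f_equal IZR) in hd. rewrite <- rdet_IZR in hd.
     unfold theta in *. simpl thF. rewrite hu. unfold rpair, toR2, rdet in *; simpl in *.
     rewrite opp_IZR. split.
     + exists k2. rewrite <- h2. ring.
     + exists (- b (S j) * k2 - k1 + w - 1)%Z.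
       rewrite !minus_IZR, !plus_IZR, !minus_IZR, !mult_IZR, opp_IZR.
       set (A1 := fst (thF t0 ell u j)) in *. set (A2 := snd (thF t0 ell u j)) in *.
       set (P := IZR (fst (n (S j)))) in *. set (Q := IZR (snd (n (S j)))) in *.
       set (P2 := IZR (fst (n (nxt r (S j))))) in *. set (Q2 := IZR (snd (n (nxt r (S j))))) in *.
       set (Pj := IZR (fst (n j))) in *. set (Qj := IZR (snd (n j))) in *.
       assert (hP2 : P2 = - IZR (b (S j)) * P - Pj) by lra.
       assert (hQ2 : Q2 = - IZR (b (S j)) * Q - Qj) by lra.
       replace ((A1 + IZR (ell (S j)) / 2 * - Q) * P2 + (A2 + IZR (ell (S j)) / 2 * P) * Q2)
         with (- IZR (b (S j)) * (A1*P + A2*Q) - (A1*Pj + A2*Qj) + IZR (ell (S j)) / 2 * (P*Q2 - Q*P2))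
         by (rewrite hP2, hQ2; ring).
       rewrite h1, h2, hd, hl. field. }
 set (pick := fun x => proj1_sig (constructive_indefinite_description _ (cover r n Hf x))).
 set (vt := fun x => rpair (theta (pick x)) x).
 assert (Hvt : forall j x, (j < r)%nat -> in_cone r n j x -> vt x = rpair (theta j) x).
 { intros j x hj hc. unfold vt, pick.
   destruct (proj2_sig (constructive_indefinite_description _ (cover r n Hf x))) as [hp hpc].
   apply (WD r n u theta Hf Hu KF); auto. }
 exists vt, theta. split; auto. split; [|split].
 - apply (pl_cont r n theta vt Hf Hvt).
 - intros j hj x hc; apply Hvt; auto.
 - intros j hj. rewrite (Hvt j _ hj (in_cone_self r n j)). destruct (HI j hj) as [[k1 h] _]. eauto.
Qed.

Lemma part2u r n u ell : complete_smooth_fan r n -> u_vectors r n u ->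
     (forall (vt1 vt2 : R * R -> R) (theta1 theta2 : nat -> R * R),
        semi_integral_support_with r n vt1 theta1 ->
        are_kinks r u theta1 (fun j => IZR (ell j)) ->
        semi_integral_support_with r n vt2 theta2 ->
        are_kinks r u theta2 (fun j => IZR (ell j)) ->
        exists m : Z * Z, forall x : R * R, vt2 x = vt1 x + rpair (toR2 m) x).
Proof.
 intros Hf Hu vt1 vt2 th1 th2 [_ [L1 H1]] K1 [_ [L2 H2]] K2.
 pose proof (fan_r r n Hf) as Hr.
 assert (D : forall j, (j < r)%nat -> fst (th2 j) - fst (th1 j) = fst (th2 0%nat) - fst (th1 0%nat) /\
                                      snd (th2 j) - snd (th1 j) = snd (th2 0%nat) - snd (th1 0%nat)).
 { induction j; intros hj. split; ring.
   destruct (IHj ltac:(lia)) as [i1 i2]. destruct (K1 (S j) hj) as [a1 a2]. destruct (K2 (S j) hj) as [b1 b2].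
   rewrite prv_S in a1, a2, b1, b2 by lia. split; lra. }
 destruct (choice_lt r _ H1) as [k1 hk1]. destruct (choice_lt r _ H2) as [k2 hk2].
 pose proof (nxt_lt r 0 Hr) as hq.
 set (a := (k2 0%nat - k1 0%nat)%Z). set (c := (k2 (nxt r 0) - k1 (nxt r 0))%Z).
 exists ((a * snd (n (nxt r 0)) - c * snd (n 0%nat))%Z, (c * fst (n 0%nat) - a * fst (n (nxt r 0)))%Z).
 intros x. destruct (cover r n Hf x) as (j & hj & hc).
 rewrite (L1 j hj x hc), (L2 j hj x hc).
 destruct (D j hj) as [d1 d2].
 pose proof (L1 0%nat Hr _ (in_cone_self r n 0)) as e1. rewrite hk1 in e1 by auto.
 pose proof (L2 0%nat Hr _ (in_cone_self r n 0)) as e2. rewrite hk2 in e2 by auto.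
 pose proof (L1 0%nat Hr _ (in_cone_next r n 0)) as e3. rewrite hk1 in e3 by auto.
 pose proof (L2 0%nat Hr _ (in_cone_next r n 0)) as e4. rewrite hk2 in e4 by auto.
 pose proof (fan_det r n Hf 0%nat Hr) as hd. apply (f_equal IZR) in hd. rewrite <- rdet_IZR in hd.
 assert (ha : IZR a = IZR (k2 0%nat) - IZR (k1 0%nat)) by (unfold a; apply minus_IZR).
 assert (hc' : IZR c = IZR (k2 (nxt r 0)) - IZR (k1 (nxt r 0))) by (unfold c; apply minus_IZR).
 destruct x as [x1 x2]. unfold rpair, toR2, rdet in *; simpl in *.
 rewrite !minus_IZR, !mult_IZR.
 set (P := IZR (fst (n 0%nat))) in *. set (Q := IZR (snd (n 0%nat))) in *.
 set (P' := IZR (fst (n (nxt r 0)))) in *. set (Q' := IZR (snd (n (nxt r 0)))) in *.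
 set (D1 := fst (th2 0%nat) - fst (th1 0%nat)) in *. set (D2 := snd (th2 0%nat) - snd (th1 0%nat)) in *.
 assert (EA : D1 * P + D2 * Q = IZR a) by (unfold D1, D2; nra).
 assert (EC : D1 * P' + D2 * Q' = IZR c) by (unfold D1, D2; nra).
 assert (I1 : D1 = IZR a * Q' - IZR c * Q).
 { rewrite <- EA, <- EC. transitivity (D1 * (P * Q' - Q * P')); [rewrite hd; ring| ring]. }
 assert (I2 : D2 = IZR c * P - IZR a * P').
 { rewrite <- EA, <- EC. transitivity (D2 * (P * Q' - Q * P')); [rewrite hd; ring| ring]. }
 rewrite <- I1, <- I2. unfold D1, D2 in *.
 assert (fst (th2 j) = fst (th1 j) + (fst (th2 0%nat) - fst (th1 0%nat))) by lra.
 assert (snd (th2 j) = snd (th1 j) + (snd (th2 0%nat) - snd (th1 0%nat))) by lra.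
 rewrite H, H0. ring.
Qed.

Theorem proposition4p3 (r : nat) (n : nat -> Z * Z) (b : nat -> Z) (u : nat -> Z * Z)
  (Hfan : complete_smooth_fan r n) (Hb : selfint_numbers r n b) (Hu : u_vectors r n u) :
  (forall (vt : R * R -> R) (theta : nat -> R * R),
     semi_integral_support_with r n vt theta ->
     exists ell : nat -> Z,
       are_kinks r u theta (fun j => IZR (ell j)) /\ twisting_numbers r b u ell) /\
  (forall ell : nat -> Z, twisting_numbers r b u ell ->
     (exists (vt : R * R -> R) (theta : nat -> R * R),
        semi_integral_support_with r n vt theta /\
        are_kinks r u theta (fun j => IZR (ell j))) /\
     (forall (vt1 vt2 : R * R -> R) (theta1 theta2 : nat -> R * R),
        semi_integral_support_with r n vt1 theta1 ->
        are_kinks r u theta1 (fun j => IZR (ell j)) ->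
        semi_integral_support_with r n vt2 theta2 ->
        are_kinks r u theta2 (fun j => IZR (ell j)) ->
        exists m : Z * Z, forall x : R * R, vt2 x = vt1 x + rpair (toR2 m) x)).
Proof.
 split.
 - apply part1; auto.
 - intros ell Ht. split.
   + apply (part2e r n b u ell); auto.
   + apply part2u; auto.
Qed.
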